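(* Let $k$ be an algebraically closed field of characteristic zero, $n\ge1$, $q\in k$ a primitive $2n$-th root of unity, $a\in k\setminus\{0\}$, and let $H=H_{4n}$ be the Hopf algebra generated by $z,x$ with $z^{2n}=1$, $zx=qxz$, $x^2=0$, $\Delta(z)=z\otimes z+a(1-q^{-2})z^{n+1}x\otimes zx$, $\Delta(x)=x\otimes 1+z^n\otimes x$, $\epsilon(z)=1$, $\epsilon(x)=0$, $S(z)=z^{-1}$, $S(x)=-z^nx$. For $i\in\mathbb Z_{2n}$ let $S_i$ be the $1$-dimensional $H$-module with basis $v_i$, $x\cdot v_i=0$, $z\cdot v_i=q^iv_i$, and let $M_i$ be the $2$-dimensional $H$-module with basis $v_1^i,v_2^i$ on which $x v_1^i=v_2^i$, $xv_2^i=0$, $zv_1^i=q^iv_1^i$, $zv_2^i=q^{i+1}v_2^i$. Then for all $i,j\in\mathbb Z_{2n}$, as $H$-modules (with the tensor product module structure via $\Delta$): (1) $S_i\otimes S_j\cong S_{i+j}$; (2) $S_i\otimes M_j\cong M_{i+j}$; (3) $M_i\otimes M_j\cong M_{i+j}\oplus M_{i+j+1}$, where indices are taken modulo $2n$. *)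

(* Defs.v *)
From HB Require Import structures.
From mathcomp Require Import all_boot all_order all_algebra.
From mathcomp Require Import mxtens.
Set Implicit Arguments. Unset Strict Implicit. Unset Printing Implicit Defensive.
Import GRing.Theory Num.Theory.
Local Open Scope ring_scope.

(* A (finite-dimensional) module over H = H_{4n} with underlying space k^d
   (column vectors) is given by the matrices of the actions of the two
   generators z and x (the action of the algebra is then determined). *)
Record Hmod (k : fieldType) (d : nat) := HMod { actz : 'M[k]_d ; actx : 'M[k]_d }.

Definition Smod (k : fieldType) (q : k) (i : nat) : Hmod k 1 :=
  HMod (q ^+ i)%:M 0.

(* M_i : basis v1 (index 0), v2 (index 1); x v1 = v2, x v2 = 0,
   z v1 = q^i v1, z v2 = q^(i+1) v2 *)
Definition Mmod (k : fieldType) (q : k) (i : nat) : Hmod k 2 :=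
  HMod (\matrix_(r < 2, c < 2) (if r == c then q ^+ (i + r) else 0))
       (delta_mx (1 : 'I_2) (0 : 'I_2)).

(* Tensor product via the coproduct
   Delta(z) = z (x) z + a(1-q^{-2}) z^{n+1}x (x) zx,
   Delta(x) = x (x) 1 + z^n (x) x. *)
Definition tensHmod (k : fieldType) (n : nat) (q a : k) d1 d2
  (V : Hmod k d1) (W : Hmod k d2) : Hmod k (d1 * d2) :=
  HMod (actz V *t actz W
        + (a * (1 - q ^- 2)) *: ((actz V ^+ n.+1 *m actx V) *t (actz W *m actx W)))
       (actx V *t (1%:M : 'M_d2) + (actz V ^+ n) *t actx W).

Definition dsumHmod (k : fieldType) d1 d2 (V : Hmod k d1) (W : Hmod k d2)
  : Hmod k (d1 + d2) :=
  HMod (block_mx (actz V) 0 0 (actz W)) (block_mx (actx V) 0 0 (actx W)).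

Definition Hiso (k : fieldType) d1 d2 (V : Hmod k d1) (W : Hmod k d2) : Prop :=
  exists (P : 'M[k]_(d2, d1)) (Q : 'M[k]_(d1, d2)),
    [/\ P *m Q = 1%:M, Q *m P = 1%:M,
        P *m actz V = actz W *m P & P *m actx V = actx W *m P].

(* Main.v *)
Require Import Defs.
From HB Require Import structures.
From mathcomp Require Import all_boot all_order all_algebra.
From mathcomp Require Import mxtens.
From mathcomp Require Import ring.
Import GRing.Theory Num.Theory.
Local Open Scope ring_scope.

Lemma nE : ((0 %/ 2 = 0)%N * (1 %/ 2 = 0)%N * (2 %/ 2 = 1)%N * (3 %/ 2 = 1)%N * (0 %% 2 = 0)%N * (1 %% 2 = 1)%N * (2 %% 2 = 0)%N * (3 %% 2 = 1)%N * (0 %/ 1 = 0)%N * (1 %/ 1 = 1)%N * (0 %% 1 = 0)%N * (1 %% 1 = 0)%N * (bump 0 0 = 1)%N * (bump 0 1 = 2)%N * (bump 0 2 = 3)%N * (2 - 2 = 0)%N * (3 - 2 = 1)%N)%type.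
Proof. by []. Qed.

Section S.
Variables (k : fieldType) (n : nat) (q : k).
Hypothesis hn : (1 <= n)%N.
Hypothesis hq : (2 * n).-primitive_root q.

Lemma q2n : q ^+ (2 * n) = 1.
Proof. exact: prim_expr_order. Qed.

Lemma qn : q ^+ n = -1.
Proof.
have : (q ^+ n) ^+ 2 == 1 by rewrite -exprM mulnC q2n.
rewrite sqrf_eq1 -(prim_order_dvd hq) => /orP [|/eqP //].
rewrite dvdn_eq => /eqP h; exfalso.
have : (n %/ (2 * n) = 0)%N by rewrite divn_small // ltn_Pmull.
by move=> h0; move: h; rewrite h0 mul0n => h1; move: hn; rewrite -h1.
Qed.

Lemma qnz : q != 0.
Proof.
apply/eqP => h; have := q2n; rewrite h expr0n muln_eq0 /=.
by case: n hn => // m _; move/eqP; rewrite eq_sym oner_eq0.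
Qed.

Lemma qE1 m : q ^+ (m * n) = (-1) ^+ m.
Proof. by rewrite mulnC exprM qn. Qed.

Lemma qE2 m : q ^+ (m * n.+1) = (-1) ^+ m * q ^+ m.
Proof. rewrite mulnC exprM exprSr qn mulN1r; exact: exprNn. Qed.

Lemma qE3 m : (q ^+ m) ^+ n = (-1) ^+ m.
Proof. by rewrite -exprM qE1. Qed.

Lemma Mmod_mod m : Mmod q (m %% (2 * n)) = Mmod q m.
Proof.
rewrite /Mmod; congr HMod; apply/matrixP => r c; rewrite !mxE.
by case: eqP => // _; rewrite !exprD (prim_expr_mod hq).
Qed.

Lemma Smod_mod m : Smod q (m %% (2 * n)) = Smod q m.
Proof. by rewrite /Smod (prim_expr_mod hq). Qed.

End S.

Lemma Zpow (k : fieldType) (q : k) i m :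
  (actz (Mmod q i)) ^+ m = \matrix_(r < 2, c < 2) (if r == c then q ^+ ((i + r) * m) else 0).
Proof.
elim: m => [|m IH].
  apply/matrixP => r c; rewrite expr0 !mxE muln0 expr0.
  by case: (r == c).
rewrite exprSr IH; apply/matrixP => r c; rewrite !mxE !big_ord_recl big_ord0 /= !mxE.
case: r => [[|[|?]] ?] //; case: c => [[|[|?]] ?] //=; rewrite ?nE; 
  rewrite ?mulr0 ?mul0r ?addr0 ?add0r // -exprD; congr (_ ^+ _); ring.
Qed.

Lemma Spow (k : fieldType) (c : k) m : ((c%:M : 'M[k]_1) ^+ m) = (c ^+ m)%:M.
Proof.
elim: m => [|m IH]; first by rewrite !expr0.
by rewrite exprSr IH exprSr scalar_mxM.
Qed.

Definition mk2 (k : fieldType) (L : seq (seq k)) : 'M[k]_2 :=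
  \matrix_(r < 2, c < 2) nth 0 (nth [::] L r) c.
Arguments mk2 {k} L.
Definition mk4 (k : fieldType) (L : seq (seq k)) : 'M[k]_4 :=
  \matrix_(r < 4, c < 4) nth 0 (nth [::] L r) c.
Arguments mk4 {k} L.

Ltac crushc := apply/matrixP;
  case => [[|[|[|[|?]]]] ?] //; case => [[|[|[|[|?]]]] ?] //;
  rewrite !(mxE, big_ord_recl, big_ord0) /= ?nE.

Lemma blockE (k : fieldType) (A B : 'M[k]_2) :
  block_mx A 0 0 B = mk4 [:: [:: A 0 0; A 0 1; 0; 0]; [:: A 1 0; A 1 1; 0; 0];
                            [:: 0; 0; B 0 0; B 0 1]; [:: 0; 0; B 1 0; B 1 1]].
Proof.
apply/matrixP => r c.
rewrite -[r](@splitK 2 2) -[c](@splitK 2 2).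
case: (split r) => r'; case: (split c) => c';
rewrite /= ?block_mxEul ?block_mxEur ?block_mxEdl ?block_mxEdr mxE /= ?mxE;
case: r' => [[|[|?]] ?] //; case: c' => [[|[|?]] ?] //=;
by congr (_ _ _); apply/val_inj.
Qed.

Lemma tens_mk2 (k : fieldType) (a00 a01 a10 a11 b00 b01 b10 b11 : k) :
  mk2 [:: [:: a00; a01]; [:: a10; a11]] *t mk2 [:: [:: b00; b01]; [:: b10; b11]]
  = mk4 [:: [:: a00 * b00; a00 * b01; a01 * b00; a01 * b01]; [:: a00 * b10; a00 * b11; a01 * b10; a01 * b11]; [:: a10 * b00; a10 * b01; a11 * b00; a11 * b01]; [:: a10 * b10; a10 * b11; a11 * b10; a11 * b11]].
Proof. by crushc. Qed.

Section T.
Variables (k : fieldType) (q : k).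

Lemma ZM i : actz (Mmod q i) = mk2 [:: [:: q ^+ i; 0]; [:: 0; q ^+ (i + 1)]].
Proof. by crushc; rewrite ?addn0. Qed.

Lemma XM i : actx (Mmod q i) = mk2 [:: [:: 0; 0]; [:: 1; 0]].
Proof. by crushc. Qed.

Lemma ZpowM i m : actz (Mmod q i) ^+ m = mk2 [:: [:: q ^+ (i * m); 0]; [:: 0; q ^+ ((i + 1) * m)]].
Proof. by rewrite Zpow; crushc; rewrite ?addn0. Qed.

Lemma tensZ (n : nat) (a : k) i j : actz (tensHmod n q a (Mmod q i) (Mmod q j)) = mk4 [:: [:: q ^+ i * q ^+ j; 0; 0; 0]; [:: 0; q ^+ i * q ^+ (j + 1); 0; 0]; [:: 0; 0; q ^+ (i + 1) * q ^+ j; 0]; [:: a * (1 - q ^- 2) * (q ^+ ((i + 1) * n.+1) * q ^+ (j + 1)); 0; 0; q ^+ (i + 1) * q ^+ (j + 1)]].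
Proof.
rewrite /tensHmod; cbn [actz actx]; rewrite ZpowM ?ZM !XM.
have -> : forall x y z w : k, mk2 [:: [:: x; y]; [:: z; w]] *m mk2 [:: [:: 0; 0]; [:: 1; 0]]
   = mk2 [:: [:: y; 0]; [:: w; 0]] by move=> x y z w; crushc; rewrite ?(mulr0, mul0r, addr0, add0r, mulr1).
rewrite !tens_mk2; crushc; rewrite ?(mulr0, mul0r, addr0, add0r, mulr1, mul1r, scaler0) //.
Qed.

Lemma tensX (n : nat) (a : k) i j : actx (tensHmod n q a (Mmod q i) (Mmod q j)) = mk4 [:: [:: 0; 0; 0; 0]; [:: q ^+ (i * n); 0; 0; 0]; [:: 1; 0; 0; 0]; [:: 0; 1; q ^+ ((i + 1) * n); 0]].
Proof.
rewrite /tensHmod; cbn [actz actx]; rewrite ZpowM ?ZM !XM.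
have -> : (1%:M : 'M[k]_2) = mk2 [:: [:: 1; 0]; [:: 0; 1]] by crushc.
rewrite !tens_mk2; crushc; rewrite ?(mulr0, mul0r, addr0, add0r, mulr1, mul1r) //.
Qed.

Lemma dsumZ u v : actz (dsumHmod (Mmod q u) (Mmod q v)) =
  mk4 [:: [:: q ^+ u; 0; 0; 0]; [:: 0; q ^+ (u + 1); 0; 0]; [:: 0; 0; q ^+ v; 0]; [:: 0; 0; 0; q ^+ (v + 1)]].
Proof. rewrite /dsumHmod; cbn [actz]; rewrite blockE; crushc; by rewrite ?addn0. Qed.

Lemma dsumX u v : actx (dsumHmod (Mmod q u) (Mmod q v)) =
  mk4 [:: [:: 0; 0; 0; 0]; [:: 1; 0; 0; 0]; [:: 0; 0; 0; 0]; [:: 0; 0; 1; 0]].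
Proof. rewrite /dsumHmod; cbn [actx]; rewrite blockE; by crushc. Qed.
End T.

Ltac crush4 := rewrite /tensHmod /dsumHmod; cbn [actz actx]; rewrite ?Spow ?Zpow ?blockE;
  crushc.

Ltac fin hn hq qz i :=
  rewrite ?(mulr0, mul0r, addr0, add0r, mulr1, mul1r, mulr1n, mulr0n);
  rewrite ?(@qE3 _ _ _ hn hq) ?addn0 ?(@qE1 _ _ _ hn hq) ?(@qE2 _ _ _ hn hq) ?exprS ?exprD ?exprS ?exprD ?expr1 ?expr0 ?mulr1n ?mulr0n;
  try (rewrite -[(-1)^+i]signr_odd; case: (odd i) => /=; rewrite ?expr1 ?expr0);
  try (field; rewrite ?qz //).

Theorem theorem2p1 (k : closedFieldType) (hchar : [pchar k] =i pred0)
  (n : nat) (hn : (1 <= n)%N) (q : k) (hq : (2 * n).-primitive_root q)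
  (a : k) (ha : a != 0) (i j : 'I_(2 * n)) :
  [/\ Hiso (tensHmod n q a (Smod q i) (Smod q j)) (Smod q ((i + j) %% (2 * n))),
      Hiso (tensHmod n q a (Smod q i) (Mmod q j)) (Mmod q ((i + j) %% (2 * n)))
    & Hiso (tensHmod n q a (Mmod q i) (Mmod q j))
           (dsumHmod (Mmod q ((i + j) %% (2 * n))) (Mmod q ((i + j).+1 %% (2 * n))))].
Proof.
rewrite !(@Mmod_mod _ _ _ hq) !(@Smod_mod _ _ _ hq).
have qz := @qnz _ _ _ hn hq.
split.
- exists 1%:M, 1%:M; split; crush4; fin hn hq qz i.
- exists (mk2 [:: [:: (-1)^+i; 0]; [:: 0; 1]]), (mk2 [:: [:: (-1)^+i; 0]; [:: 0; 1]]).
  split; crush4; fin hn hq qz i.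
exists (mk4 [:: [:: 1; 0; 0; 0]; [:: 0; 0; 1; 0]; [:: 0; 1; - (-1) ^+ i; 0]; [:: - (a * (-1) ^+ i); 0; 0; 1]]).
exists (mk4 [:: [:: 1; 0; 0; 0]; [:: 0; (-1) ^+ i; 1; 0]; [:: 0; 1; 0; 0]; [:: a * (-1) ^+ i; 0; 0; 1]]).
rewrite tensZ tensX dsumZ dsumX.
split; time (crushc; fin hn hq qz i).
Qed.
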